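(* Let $X$ be a nonempty set, let $(Y,\|\cdot,\cdot\|)$ be a linear $2$-normed space of dimension $d$ with $2\le d<\infty$, and let $\mathcal I\subset 2^{\mathbb N}$ be an admissible ideal. Let $f,f_n:X\to Y$ ($n\in\mathbb N$). If $\{f_n\}$ is $\mathcal I^*$-equal convergent to $f$, then $\{f_n\}$ is $\mathcal I$-equal convergent to $f$.
   Context: A $2$-norm on a real vector space $Y$ of dimension $d$, $2\le d<\infty$, is a function $\|\cdot,\cdot\|:Y\times Y\to\mathbb R$ such that: $\|x,y\|=0$ iff $x,y$ are linearly dependent; $\|x,y\|=\|y,x\|$; $\|\alpha x,y\|=|\alpha|\,\|x,y\|$ for $\alpha\in\mathbb R$; $\|x+y,z\|\le\|x,z\|+\|y,z\|$. An ideal $\mathcal I\subset 2^{\mathbb N}$ is a family closed under finite unions and subsets; it is admissible if it is proper ($\mathbb N\notin\mathcal I$) and contains all singletons. $\mathcal F(\mathcal I)=\{A\subset\mathbb N:\mathbb N\setminus A\in\mathcal I\}$. A real sequence $\{a_n\}$ is $\mathcal I$-convergent to $a$ ($\mathcal I\text{-}\lim a_n=a$) if for every $\varepsilon>0$, $\{n:|a_n-a|\ge\varepsilon\}\in\mathcal I$. $\{f_n\}$ is $\mathcal I$-equal convergent to $f$ if there is a sequence $\{\varepsilon_n\}$ of positive reals with $\mathcal I\text{-}\lim\varepsilon_n=0$ such that for every $x\in X$ and every $z\in Y$, $\{n\in\mathbb N:\|f_n(x)-f(x),z\|\ge\varepsilon_n\}\in\mathcal I$. $\{f_n\}$ is $\mathcal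 I^*$-equal convergent to $f$ if there exist a set $M=\{m_1<m_2<\cdots\}\in\mathcal F(\mathcal I)$ and a sequence $\{\varepsilon_k\}$ of positive reals with $\lim_{k\to\infty}\varepsilon_k=0$ such that for every $x\in X$ there is $p\in\mathbb N$ with $\|f_{m_k}(x)-f(x),z\|<\varepsilon_k$ for all $k\ge p$ and all $z\in Y$. *)

(* Defs.v *)
From HB Require Import structures.
From mathcomp Require Import all_boot all_order all_algebra.
From mathcomp Require Import reals.
Set Implicit Arguments. Unset Strict Implicit. Unset Printing Implicit Defensive.
Import Order.TTheory GRing.Theory Num.Theory.
Local Open Scope ring_scope.

Definition lin_dep (R : realType) (Y : vectType R) (x y : Y) : Prop :=
  ~~ free [:: x; y].

Definition is_2norm (R : realType) (Y : vectType R) (nrm : Y -> Y -> R) : Prop :=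
  [/\ (forall x y, nrm x y = 0 <-> lin_dep x y),
      (forall x y, nrm x y = nrm y x),
      (forall (a : R) x y, nrm (a *: x) y = `|a| * nrm x y)
    & (forall x y z, nrm (x + y) z <= nrm x z + nrm y z)].

Definition is_ideal (I : (nat -> Prop) -> Prop) : Prop :=
  (forall A B : nat -> Prop, I A -> I B -> I (fun n => A n \/ B n)) /\
  (forall A B : nat -> Prop, (forall n, B n -> A n) -> I A -> I B).

Definition admissible (I : (nat -> Prop) -> Prop) : Prop :=
  [/\ is_ideal I, ~ I (fun _ => True) & forall k : nat, I (fun n => n = k)].

Definition filterF (I : (nat -> Prop) -> Prop) (A : nat -> Prop) : Prop :=
  I (fun n => ~ A n).

Definition I_lim (R : realType) (I : (nat -> Prop) -> Prop) (a : nat -> R) (l : R)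
  : Prop :=
  forall eps : R, 0 < eps -> I (fun n => eps <= `|a n - l|).

Definition seq_lim (R : realType) (a : nat -> R) (l : R) : Prop :=
  forall eps : R, 0 < eps -> exists N, forall k, (N <= k)%N -> `|a k - l| < eps.

Definition I_equal_conv (R : realType) (Y : vectType R) (nrm : Y -> Y -> R)
  (X : Type) (I : (nat -> Prop) -> Prop) (fn : nat -> X -> Y) (f : X -> Y) : Prop :=
  exists eps : nat -> R,
    [/\ (forall n, 0 < eps n), I_lim I eps 0 &
        forall (x : X) (z : Y), I (fun n => eps n <= nrm (fn n x - f x) z)].

(* M = {m 0 < m 1 < ...} in F(I), given by a strictly increasing enumeration m *)
Definition Istar_equal_conv (R : realType) (Y : vectType R) (nrm : Y -> Y -> R)
  (X : Type) (I : (nat -> Prop) -> Prop) (fn : nat -> X -> Y) (f : X -> Y) : Prop :=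
  exists m : nat -> nat,
    (forall k, (m k < m k.+1)%N) /\
    filterF I (fun n => exists k, m k = n) /\
    exists eps : nat -> R,
      [/\ (forall k, 0 < eps k), seq_lim eps 0 &
          forall x : X, exists p : nat, forall k, (p <= k)%N ->
            forall z : Y, nrm (fn (m k) x - f x) z < eps k].

(* Main.v *)
Require Import Defs.
From HB Require Import structures.
From mathcomp Require Import all_boot all_order all_algebra.
From mathcomp Require Import reals.
From mathcomp Require Import boolp.
Import Order.TTheory GRing.Theory Num.Theory.
Local Open Scope ring_scope.

Section Aux.
Variable m : nat -> nat.
Hypothesis mS : forall k, (m k < m k.+1)%N.

Lemma m_lt : {homo m : i j / (i < j)%N >-> (i < j)%N}.
Proof. apply: homo_ltn => //; exact: ltn_trans. Qed.

Lemma m_ge k : (k <= m k)%N.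
Proof.
elim: k => // k IH; apply: leq_ltn_trans IH (mS k).
Qed.

Lemma m_inj : injective m.
Proof.
move=> i j E; case: (ltngtP i j) => // H.
  by have := @m_lt _ _ H; rewrite E ltnn.
by have := @m_lt _ _ H; rewrite E ltnn.
Qed.

Definition idx (n : nat) : option nat :=
  match [pick k : 'I_n.+1 | m k == n] with Some k => Some (nat_of_ord k) | None => None end.

Lemma idx_m k : idx (m k) = Some k.
Proof.
rewrite /idx; case: pickP => [j /eqP Hj|H].
  by rewrite (@m_inj _ _ Hj).
have Hk : (k < (m k).+1)%N by rewrite ltnS m_ge.
by have := H (Ordinal Hk); rewrite /= eqxx.
Qed.

Lemma idx_none n : idx n = None -> ~ exists k, m k = n.
Proof. by move=> H [k Hk]; move: H; rewrite -Hk idx_m. Qed.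

Variable I : (nat -> Prop) -> Prop.
Hypothesis HI : admissible I.
Hypothesis HM : filterF I (fun n => exists k, m k = n).

Lemma key (N : nat) :
  I (fun n => (~ exists k, m k = n) \/ exists k, (k < N)%N /\ m k = n).
Proof.
case: HI => [[HU HS] _ Hs].
elim: N => [|N IH].
  apply: HS HM => n [//|[k []]] //.
apply: HS (HU _ _ IH (Hs (m N))) => n [H|[k [Hk E]]]; first by left; left.
rewrite ltnS leq_eqVlt in Hk; case/orP: Hk => [/eqP Hk|Hk].
  by right; subst.
by left; right; exists k.
Qed.

Lemma key2 (N : nat) (P : nat -> Prop) :
  (forall k, P (m k) -> (k < N)%N) -> I P.
Proof.
move=> H; case: HI => [[_ HS] _ _].
apply: HS (key N) => n Pn.
case: (pselect (exists k, m k = n)) => [[k Hk]|]; last by left.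
by right; exists k; split => //; apply: H; rewrite Hk.
Qed.
End Aux.


Theorem mainTheorem5 (R : realType) (X : Type) (HX : inhabited X)
  (Y : vectType R) (d : nat) (Hdim : \dim (fullv : {vspace Y}) = d) (Hd : (2 <= d)%N)
  (nrm : Y -> Y -> R) (Hnrm : is_2norm nrm)
  (I : (nat -> Prop) -> Prop) (HI : admissible I)
  (fn : nat -> X -> Y) (f : X -> Y) :
  Istar_equal_conv nrm I fn f -> I_equal_conv nrm I fn f.
Proof.
move=> [m [mS [HM [eps [Hpos Hlim Hconv]]]]].
pose e n := match idx m n with Some k => eps k | None => 1 end.
have em k : e (m k) = eps k by rewrite /e idx_m.
exists e; split.
- by move=> n; rewrite /e; case: idx.
- move=> r r0; have [N HN] := Hlim r r0.
  apply: (@key2 m I HI HM N) => k; rewrite em subr0 => Hk.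
  rewrite ltnNge; apply/negP => /HN; rewrite subr0 => /(le_lt_trans Hk).
  by rewrite ltxx.
- move=> x z; have [p Hp] := Hconv x.
  apply: (@key2 m I HI HM p) => k; rewrite em => Hk.
  rewrite ltnNge; apply/negP => /Hp /(_ z) /(le_lt_trans Hk).
  by rewrite ltxx.
Qed.
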